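(* There exist constants $\epsilon_0\in(0,1)$ and $C>0$, independent of $k,\alpha,\beta$, such that for all $(k,\alpha,\beta)\in\mathscr I$ one has $B(y^k_\beta,\epsilon_0\delta^k)\subset Q^k_\alpha$ and $$|\psi^k_{\alpha,\beta}(x)|\ \ge\ C\,\frac{1}{\sqrt{\mu(Q^k_\alpha)}}\qquad\text{for all } x\in B(y^k_\beta,\epsilon_0\delta^k).$$
   Context: Setting. $(\mathcal X,d,\mu)$ is a metric measure space of homogeneous type: $d$ is a metric, $\mu$ is a nonnegative Borel measure, finite and positive on balls $B(x,r):=\{y:d(x,y)<r\}$, with $\mu(B(x,2r))\le C_{(\mathcal X)}\mu(B(x,r))$ for all $x\in\mathcal X$, $r>0$. It is assumed that $\operatorname{diam}\mathcal X=\infty$ and $\mu(\{x\})=0$ for all $x$. Write $V(x,r):=\mu(B(x,r))$. Dyadic structure. Fix $\delta\in(0,1/1000]$. For each $k\in\mathbb Z$ let $\mathscr X^k=\{x^k_\alpha\}_{\alpha\in\mathscr A_k}$ be reference dyadic points: $\mathscr X^0$ is a maximal $1$-separated subset of $\mathcal X$; for $k\ge1$, $\mathscr X^k\supset\mathscr X^{k-1}$ is a maximal $\delta^k$-separated subset of $\mathcal X$ and $\mathscr X^{-k}\subset\mathscr X^{-(k-1)}$ is a maximal $\delta^{-k}$-separated subset of $\mathscr X^{-(k-1)}$; indices are arranged so that $\mathscr A_k\subset\mathscr A_{k+1}$ and $x^{k+1}_\alpha=x^k_\alpha$ for $\alpha\in\mathscr A_k$. $\{Q^k_\alpha\}_{k\in\mathbb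 Z,\alpha\in\mathscr A_k}$ is the associated (Hytönen–Kairema) system of half-open dyadic cubes: for each $k$, $\mathcal X=\bigcup_{\alpha\in\mathscr A_k}Q^k_\alpha$ disjointly; for $\ell\ge k$, either $Q^\ell_\beta\subset Q^k_\alpha$ or $Q^\ell_\beta\cap Q^k_\alpha=\emptyset$; and $B(x^k_\alpha,\delta^k/3)\subset Q^k_\alpha\subset B(x^k_\alpha,4\delta^k)$. Let $L(k,\alpha):=\{\beta\in\mathscr A_{k+1}:Q^{k+1}_\beta\subset Q^k_\alpha\}$ (so $Q^k_\alpha=\bigcup_{\beta\in L(k,\alpha)}Q^{k+1}_\beta$, $\alpha\in L(k,\alpha)$, and $d(x^{k+1}_\beta,x^k_\alpha)<2\delta^k$ for $\beta\in L(k,\alpha)$), $\tilde{\mathscr A}:=\{(k,\alpha):\#L(k,\alpha)>1\}$, $\tilde L(k,\alpha):=L(k,\alpha)\setminus\{\alpha\}$, $\mathscr I:=\{(k,\alpha,\beta):(k,\alpha)\in\tilde{\mathscr A},\ \beta\in\tilde L(k,\alpha)\}$, $\mathscr G_k:=\mathscr A_{k+1}\setminus\mathscr A_k$, and $y^k_\beta:=x^{k+1}_\beta$. Wavelets. There are (Auscher–Hytönen) spline functions $s^k_\alpha$, $k\in\mathbb Z$, $\alpha\in\mathscr A_k$, with $\chi_{B(x^k_\alpha,\delta^k/8)}\le s^k_\alpha\le\chi_{B(x^k_\alpha,8\delta^k)}$, $s^k_\alpha(x^k_\beta)=\delta_{\alpha\beta}$ (Kronecker delta), $\sum_{\alpha\in\mathscr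 A_k}s^k_\alpha\equiv1$, and $|s^k_\alpha(x)-s^k_\alpha(y)|\le C(d(x,y)/\delta^k)^\eta$ for some $\eta\in(0,1]$. For each $k$, $\tilde M$ denotes the matrix indexed by $\mathscr G_k\times\mathscr G_k$ with entries $\tilde M(\gamma,\gamma')=(s^{k+1}_\gamma,s^{k+1}_{\gamma'})_{L^2}/\sqrt{V(y^k_\gamma,\delta^k)V(y^k_{\gamma'},\delta^k)}$; it is a bounded (uniformly in $k$), positive, self-adjoint and invertible operator on $\ell^2(\mathscr G_k)$. With $\mu^{k+1}_\gamma:=V(x^{k+1}_\gamma,\delta^{k+1})$, the regular wavelets are $\psi^k_{\alpha,\beta}:=\sum_{\gamma\in\mathscr G_k}\tilde M^{-1/2}(\beta,\gamma)\,s^{k+1}_\gamma/\sqrt{\mu^{k+1}_\gamma}$ for $(k,\alpha,\beta)\in\mathscr I$. They form an orthonormal basis of $L^2(\mathcal X)$, and there are constants $\nu>0$, $C>0$ such that $|\psi^k_{\alpha,\beta}(x)|\le C\,V(y^k_\beta,\delta^k)^{-1/2}e^{-\nu\delta^{-k}d(y^k_\beta,x)}$ for all $x$; $|\psi^k_{\alpha,\beta}(x)-\psi^k_{\alpha,\beta}(y)|\le C\,V(y^k_\beta,\delta^k)^{-1/2}(d(x,y)/\delta^k)^\eta e^{-\nu\delta^{-k}d(y^k_\beta,x)}$ whenever $d(x,y)\le\delta^k$; and $\int_{\mathcal X}\psi^k_{\alpha,\beta}\,d\mu=0$. *)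

(* Defs.v *)
From HB Require Import structures.
From mathcomp Require Import all_boot all_order all_algebra.
From mathcomp Require Import all_classical all_reals all_analysis.
Set Implicit Arguments. Unset Strict Implicit. Unset Printing Implicit Defensive.
Import Order.TTheory GRing.Theory Num.Theory.
Local Open Scope classical_set_scope.
Local Open Scope ring_scope.

Section Defs.
Variable R : realType.

Definition is_metric (T : Type) (d : T -> T -> R) : Prop :=
  (forall x y, 0 <= d x y) /\ (forall x y, d x y = 0 <-> x = y) /\
  (forall x y, d x y = d y x) /\ (forall x y z, d x z <= d x y + d y z).

Definition dball (T : Type) (d : T -> T -> R) (x : T) (r : R) : set T :=
  [set y | d x y < r].

Definition dopen (T : Type) (d : T -> T -> R) (U : set T) : Prop :=
  forall z, U z -> exists2 r, 0 < r & dball d z r `<=` U.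

(** V(x,r) = mu(B(x,r)) (finite by hypothesis, so we take the real value) *)
Definition Vol (dT : measure_display) (T : measurableType dT)
  (mu : {measure set T -> \bar R}) (d : T -> T -> R) (x : T) (r : R) : R :=
  fine (mu (dball d x r)).

Definition separated (T : Type) (d : T -> T -> R) (r : R) (S : set T) : Prop :=
  forall a b, S a -> S b -> a <> b -> r <= d a b.

Definition max_separated (T : Type) (d : T -> T -> R) (r : R) (S U : set T) : Prop :=
  S `<=` U /\ separated d r S /\
  forall S', S `<=` S' -> S' `<=` U -> separated d r S' -> S' = S.

(** The matrix K (indexed by G x G) defines a bounded operator on l^2(G) of norm <= Lam
    (equivalently: all finite sections have operator norm <= Lam). *)
Definition op_bounded (I : choiceType) (G : set I) (K : I -> I -> R) (Lam : R) : Prop :=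
  forall (F : seq I), uniq F -> (forall i, i \in F -> G i) -> forall v : I -> R,
    \sum_(i <- F) (\sum_(j <- F) K i j * v j) ^+ 2 <= Lam ^+ 2 * \sum_(j <- F) v j ^+ 2.

Definition mx_symmetric (I : choiceType) (G : set I) (K : I -> I -> R) : Prop :=
  forall i j, G i -> G j -> K i j = K j i.

(** positivity: <K v, v> >= 0 (on finitely supported v, hence on l^2 by boundedness) *)
Definition mx_positive (I : choiceType) (G : set I) (K : I -> I -> R) : Prop :=
  forall (F : seq I), uniq F -> (forall i, i \in F -> G i) -> forall v : I -> R,
    0 <= \sum_(i <- F) \sum_(j <- F) v i * K i j * v j.

(** sum over the (possibly infinite) index set G of an absolutely summable family,
    as (sum of positive parts) - (sum of negative parts) *)
Definition gsum (I : choiceType) (G : set I) (f : I -> R) : R :=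
  fine (\esum_(l in G) (Num.max (f l) 0)%:E) - fine (\esum_(l in G) (Num.max (- f l) 0)%:E).

Definition mxmul (I : choiceType) (G : set I) (A B : I -> I -> R) : I -> I -> R :=
  fun i j => gsum G (fun l => A i l * B l j).

(** P is the (unique) bounded positive self-adjoint square root of K^{-1},
    i.e. P = K^{-1/2}: P bounded, P = P^*, P >= 0 and P P K = Id on l^2(G). *)
Definition is_inv_sqrt (I : choiceType) (G : set I) (K P : I -> I -> R) : Prop :=
  (exists Lam, op_bounded G P Lam) /\ mx_symmetric G P /\ mx_positive G P /\
  forall i j, G i -> G j ->
    mxmul G (mxmul G P P) K i j = (if i == j then 1 else 0).

Definition Lset (I : Type) (T : Type) (A : int -> set I) (Q : int -> I -> set T)
  (k : int) (a : I) : set I :=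
  [set b | A (k + 1) b /\ Q (k + 1) b `<=` Q k a].

Definition in_scrI (I : Type) (T : Type) (A : int -> set I) (Q : int -> I -> set T)
  (k : int) (a b : I) : Prop :=
  A k a /\
  (exists b1 b2, Lset A Q k a b1 /\ Lset A Q k a b2 /\ b1 <> b2) /\
  Lset A Q k a b /\ b <> a.

Definition Gset (I : Type) (A : int -> set I) (k : int) : set I := A (k + 1) `\` A k.

Definition Mtilde (dT : measure_display) (T : measurableType dT) (I : Type)
  (mu : {measure set T -> \bar R}) (d : T -> T -> R) (delta : R)
  (x : I -> T) (s : int -> I -> T -> R) (k : int) (g g' : I) : R :=
  fine (\int[mu]_z (s (k + 1) g z * s (k + 1) g' z)%:E) /
  Num.sqrt (Vol mu d (x g) (delta ^ k) * Vol mu d (x g') (delta ^ k)).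

(** the regular wavelet psi^k_{alpha,beta} (it does not depend on alpha),
    with P k = tilde M^{-1/2} at level k *)
Definition psi (dT : measure_display) (T : measurableType dT) (I : choiceType)
  (mu : {measure set T -> \bar R}) (d : T -> T -> R) (delta : R)
  (A : int -> set I) (x : I -> T) (s : int -> I -> T -> R)
  (P : int -> I -> I -> R) (k : int) (b : I) (z : T) : R :=
  gsum (Gset A k) (fun g => P k b g * s (k + 1) g z /
                             Num.sqrt (Vol mu d (x g) (delta ^ (k + 1)))).

End Defs.

(* Main.v *)
Require Import Defs.
From HB Require Import structures.
From mathcomp Require Import all_boot all_order all_algebra.
From mathcomp Require Import all_classical all_reals all_analysis.
From mathcomp Require Import lra ring finmap.
Import Order.TTheory GRing.Theory Num.Theory.
Set Implicit Arguments. Unset Strict Implicit.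
Local Open Scope classical_set_scope.
Local Open Scope ring_scope.

Section Sums.
Context {R : realType} {I : choiceType}.
Implicit Types (G : set I) (f g : I -> R) (s : seq I).

Definition inG G s := forall i, i \in s -> G i.

Lemma sum_split s s' f : uniq s -> uniq s' -> {subset s <= s'} ->
  \sum_(i <- s') f i = \sum_(i <- s) f i + \sum_(i <- s' | i \notin s) f i.
Proof.
move=> us us' ss'; rewrite (bigID (fun i => i \in s)) /=; congr (_ + _).
rewrite -big_filter; apply: perm_big; apply: uniq_perm.
- exact: filter_uniq.
- exact: us.
- move=> i; rewrite mem_filter; apply/andP/idP => [[]//|iss]; split => //; exact: ss'.
Qed.

Lemma sum_le_sub s s' f : uniq s -> uniq s' -> {subset s <= s'} ->
  (forall i, i \in s' -> 0 <= f i) -> \sum_(i <- s) f i <= \sum_(i <- s') f i.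
Proof.
move=> us us' ss' f0; rewrite (sum_split f us us' ss') lerDl.
rewrite big_seq_cond; apply: sumr_ge0 => i /andP[/f0 ? _] //.
Qed.

Lemma sum_delta s b (X : I -> R) : uniq s -> b \in s ->
  \sum_(i <- s) (i == b)%:R * X i = X b.
Proof.
move=> us bs; rewrite (bigD1_seq b) //= eqxx mul1r big1 ?addr0 // => i /negPf ->.
by rewrite mul0r.
Qed.

Lemma esum_ge_seq G s (a : I -> R) : uniq s -> inG G s ->
  ((\sum_(i <- s) a i)%:E <= \esum_(i in G) (a i)%:E)%E.
Proof.
move=> us sG; apply: esum_ge; exists [set` s].
  by split; [exact: finite_seq | move=> i /= ; exact: sG].
by rewrite -fsbig_seq // sumEFin.
Qed.

Lemma esum_le_bound G (a : I -> R) (B : R) :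
  (forall s, uniq s -> inG G s -> \sum_(i <- s) a i <= B) ->
  (\esum_(i in G) (a i)%:E <= B%:E)%E.
Proof.
move=> H; apply: ge_ereal_sup => _ [A [finA AG] <-].
rewrite fsbig_finite // sumEFin lee_fin; apply: H; first exact: fset_uniq.
by move=> i; rewrite in_fset_set // => /set_mem; exact: AG.
Qed.

Lemma esum_near G (a : I -> R) S e :
  \esum_(i in G) (a i)%:E = S%:E -> 0 < e ->
  exists s, [/\ uniq s, inG G s & S - e < \sum_(i <- s) a i].
Proof.
move=> hS e0.
have : ((S - e)%:E < \esum_(i in G) (a i)%:E)%E by rewrite hS lte_fin; lra.
rewrite /esum => /ereal_sup_gt[_ [A [finA AG] <-]] H.
exists (fset_set A); split.
- exact: fset_uniq.
- move=> i; rewrite in_fset_set // => /set_mem; exact: AG.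
- by move: H; rewrite fsbig_finite // sumEFin lte_fin.
Qed.


Definition sumbl G f := (\esum_(i in G) (`|f i|)%:E < +oo)%E.
Definition nrm G f := fine (\esum_(i in G) (`|f i|)%:E).
Definition approx G f (L : R) := forall e, 0 < e -> exists2 s0, inG G s0 &
   forall s, uniq s -> inG G s -> {subset s0 <= s} -> `|\sum_(i <- s) f i - L| <= e.

Lemma sumbl_bound G f B : (forall s, uniq s -> inG G s -> \sum_(i <- s) `|f i| <= B) ->
  sumbl G f.
Proof.
move=> H; rewrite /sumbl; apply: (le_lt_trans (@esum_le_bound G (fun i => `|f i|) B H)).
exact: ltry.
Qed.

Lemma esum_fin G (a : I -> R) : (forall i, G i -> 0 <= a i) ->
  (\esum_(i in G) (a i)%:E < +oo)%E ->
  \esum_(i in G) (a i)%:E = (fine (\esum_(i in G) (a i)%:E))%:E.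
Proof.
move=> a0 h; rewrite fineK // ge0_fin_numE //; apply: esum_ge0 => i /a0.
by rewrite lee_fin.
Qed.

Lemma sumbl_le G f s : sumbl G f -> uniq s -> inG G s ->
  \sum_(i <- s) `|f i| <= nrm G f.
Proof.
move=> h us sG; have := esum_ge_seq (fun i => `|f i|) us sG.
by rewrite (esum_fin _ h) // lee_fin.
Qed.

Lemma max_decomp (x : R) : x = Num.max x 0 - Num.max (- x) 0.
Proof. rewrite !maxr_absE !subr0 normrN; lra. Qed.

Lemma maxp_ge0 (x : R) : 0 <= Num.max x 0.
Proof. rewrite maxr_absE subr0; have := ler_norm (- x); rewrite normrN; lra. Qed.

Lemma maxp_le (x : R) : Num.max x 0 <= `|x|.
Proof. rewrite maxr_absE subr0; have := ler_norm x; lra. Qed.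

Lemma gsum_approx G f : sumbl G f -> approx G f (gsum G f).
Proof.
move=> h.
have hp : (\esum_(i in G) (Num.max (f i) 0)%:E < +oo)%E.
  apply: le_lt_trans h; apply: le_esum => i _; rewrite lee_fin.
  exact: maxp_le.
have hn : (\esum_(i in G) (Num.max (- f i) 0)%:E < +oo)%E.
  apply: le_lt_trans h; apply: le_esum => i _; rewrite lee_fin.
  by rewrite -(normrN (f i)); exact: maxp_le.
have ep := esum_fin (fun i _ => maxp_ge0 (f i)) hp.
have en := esum_fin (fun i _ => maxp_ge0 (- f i)) hn.
move=> e e0; have e2 : 0 < e / 2 by rewrite divr_gt0.
have [s1 [us1 s1G H1]] := esum_near ep e2.
have [s2 [us2 s2G H2]] := esum_near en e2.
exists (s1 ++ s2); first by move=> i; rewrite mem_cat => /orP[/s1G|/s2G].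
move=> s us sG sub.
have A1 : \sum_(i <- s1) Num.max (f i) 0 <= \sum_(i <- s) Num.max (f i) 0.
  apply: sum_le_sub => // [i i1|i _]; last exact: maxp_ge0.
  by apply: sub; rewrite mem_cat i1.
have B1 : \sum_(i <- s2) Num.max (- f i) 0 <= \sum_(i <- s) Num.max (- f i) 0.
  apply: sum_le_sub => // [i i1|i _]; last exact: maxp_ge0.
  by apply: sub; rewrite mem_cat i1 orbT.
have A2 := esum_ge_seq (fun i => Num.max (f i) 0) us sG.
have B2 := esum_ge_seq (fun i => Num.max (- f i) 0) us sG.
rewrite ep lee_fin in A2; rewrite en lee_fin in B2.
have -> : \sum_(i <- s) f i =
   \sum_(i <- s) Num.max (f i) 0 - \sum_(i <- s) Num.max (- f i) 0.
  by rewrite -sumrB; apply: eq_bigr => i _; rewrite -max_decomp.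
rewrite /gsum ler_norml; apply/andP; split; lra.
Qed.

Lemma approx_unique G f L1 L2 : approx G f L1 -> approx G f L2 -> L1 = L2.
Proof.
move=> h1 h2; apply/eqP; rewrite -subr_eq0 -normr_le0.
apply/ler_addgt0Pr => e e0; rewrite add0r.
have e2 : 0 < e / 2 by rewrite divr_gt0.
have [s1 s1G H1] := h1 _ e2; have [s2 s2G H2] := h2 _ e2.
set s := undup (s1 ++ s2).
have us : uniq s by apply: undup_uniq.
have sG : inG G s by move=> i; rewrite mem_undup mem_cat => /orP[/s1G|/s2G].
have sub1 : {subset s1 <= s} by move=> i hi; rewrite mem_undup mem_cat hi.
have sub2 : {subset s2 <= s} by move=> i hi; rewrite mem_undup mem_cat hi orbT.
have K1 := H1 s us sG sub1; have K2 := H2 s us sG sub2.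
move: K1 K2; rewrite !ler_norml => /andP[K1 K1'] /andP[K2 K2'].
apply/andP; split; lra.
Qed.

Lemma gsum_eq G f L : sumbl G f -> approx G f L -> gsum G f = L.
Proof. by move=> h; apply: approx_unique; exact: gsum_approx. Qed.

Lemma approx_ext G f g L : (forall i, f i = g i) -> approx G f L -> approx G g L.
Proof.
move=> e h eps eps0; have [s0 s0G H] := h _ eps0; exists s0 => // s us sG sub.
by rewrite -(eq_bigr _ (fun i _ => e i)); apply: H.
Qed.

Lemma approxD G f g L1 L2 : approx G f L1 -> approx G g L2 ->
  approx G (fun i => f i + g i) (L1 + L2).
Proof.
move=> h1 h2 e e0; have e2 : 0 < e / 2 by rewrite divr_gt0.
have [s1 s1G H1] := h1 _ e2; have [s2 s2G H2] := h2 _ e2.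
exists (s1 ++ s2); first by move=> i; rewrite mem_cat => /orP[/s1G|/s2G].
move=> s us sG sub; rewrite big_split /=.
have := H1 s us sG (fun i hi => sub i ltac:(by rewrite mem_cat hi)).
have := H2 s us sG (fun i hi => sub i ltac:(by rewrite mem_cat hi orbT)).
rewrite !ler_norml => /andP[? ?] /andP[? ?]; apply/andP; split; lra.
Qed.

Lemma approxZ G f L c : approx G f L -> approx G (fun i => c * f i) (c * L).
Proof.
move=> h e e0; have c1 : 0 < `|c| + 1 by have := normr_ge0 c; lra.
have e1 : 0 < e / (`|c| + 1) by rewrite divr_gt0.
have [s0 s0G H] := h _ e1; exists s0 => // s us sG sub.
rewrite -mulr_sumr -mulrBr normrM.
have Hs := H s us sG sub.
apply: (le_trans (ler_wpM2l (normr_ge0 c) Hs)).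
rewrite mulrA ler_pdivrMr // mulrDr mulr1 [e * _]mulrC lerDl; exact: ltW.
Qed.

Lemma approx0 G : approx G (fun _ => 0) 0.
Proof.
move=> e e0; exists [::] => // s _ _ _; rewrite big1 // subr0 normr0; exact: ltW.
Qed.

Lemma approx_sum G (r : seq I) (F : I -> I -> R) (L : I -> R) :
  (forall l, l \in r -> approx G (F l) (L l)) ->
  approx G (fun i => \sum_(l <- r) F l i) (\sum_(l <- r) L l).
Proof.
elim: r => [|l r IH] h.
  rewrite big_nil; apply: approx_ext (approx0 G) => i; by rewrite big_nil.
rewrite big_cons; apply: approx_ext (approxD (h l (mem_head _ _))
   (IH (fun l' hl' => h l' ltac:(by rewrite in_cons hl' orbT)))) => i.
by rewrite big_cons.
Qed.

Lemma approx_fin G f s0 : uniq s0 -> inG G s0 ->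
  (forall i, G i -> i \notin s0 -> f i = 0) -> approx G f (\sum_(i <- s0) f i).
Proof.
move=> us0 s0G h0 e e0; exists s0 => // s us sG sub.
rewrite (sum_split f us0 us sub) [X in _ + X - _]big1_seq ?addr0 ?subrr ?normr0 ?(ltW e0) //.
by move=> i /andP[ni /sG Gi]; apply: h0.
Qed.

Lemma approx_ge G f L s : (forall i, G i -> 0 <= f i) -> approx G f L ->
  uniq s -> inG G s -> \sum_(i <- s) f i <= L.
Proof.
move=> f0 h us sG; apply/ler_addgt0Pr => e e0.
have [s0 s0G H] := h _ e0.
set s' := undup (s ++ s0).
have us' : uniq s' by apply: undup_uniq.
have s'G : inG G s' by move=> i; rewrite mem_undup mem_cat => /orP[/sG|/s0G].
have := H s' us' s'G (fun i hi => ltac:(by rewrite mem_undup mem_cat hi orbT)).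
rewrite ler_norml => /andP[_ H2].
have : \sum_(i <- s) f i <= \sum_(i <- s') f i.
  apply: sum_le_sub => // [i hi|i /s'G]; last exact: f0.
  by rewrite mem_undup mem_cat hi.
lra.
Qed.

Lemma sumblD G f g : sumbl G f -> sumbl G g -> sumbl G (fun i => f i + g i).
Proof.
move=> hf hg; apply: (@sumbl_bound _ _ (nrm G f + nrm G g)) => s us sG.
apply: (le_trans (y := \sum_(i <- s) (`|f i| + `|g i|))).
  by apply: ler_sum => i _; apply: ler_normD.
by rewrite big_split /= lerD // sumbl_le.
Qed.

Lemma sumblZ G f c : sumbl G f -> sumbl G (fun i => c * f i).
Proof.
move=> hf; apply: (@sumbl_bound _ _ (`|c| * nrm G f)) => s us sG.
under eq_bigr do rewrite normrM.
by rewrite -mulr_sumr ler_wpM2l // sumbl_le.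
Qed.

Lemma sumbl0 G : sumbl G (fun _ => 0).
Proof. apply: (@sumbl_bound _ _ 0) => s _ _; rewrite big1 // => i _; by rewrite normr0. Qed.

Lemma sumbl_ext G f g : (forall i, f i = g i) -> sumbl G f -> sumbl G g.
Proof. by move=> e; have -> : g = f by apply: funext => i; rewrite e. Qed.

Lemma sumbl_sum G (r : seq I) (F : I -> I -> R) :
  (forall l, l \in r -> sumbl G (F l)) -> sumbl G (fun i => \sum_(l <- r) F l i).
Proof.
elim: r => [|l r IH] h.
  by apply: sumbl_ext (sumbl0 G) => i; rewrite big_nil.
apply: sumbl_ext (sumblD (h l (mem_head _ _)) (IH (fun l' hl' => h l' ltac:(by rewrite in_cons hl' orbT)))).
by move=> i; rewrite big_cons.
Qed.

Lemma sumbl_fin G f s0 : uniq s0 -> inG G s0 ->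
  (forall i, G i -> i \notin s0 -> f i = 0) -> sumbl G f.
Proof.
move=> us0 s0G h0; apply: (@sumbl_bound _ _ (\sum_(i <- s0) `|f i|)) => s us sG.
rewrite (bigID (fun i => i \in s0)) /= [X in _ + X]big1_seq ?addr0; last first.
  by move=> i /andP[ni /sG Gi]; rewrite h0 ?normr0.
rewrite -big_filter; apply: sum_le_sub => //.
- exact: filter_uniq.
- by move=> i; rewrite mem_filter => /andP[].
Qed.

Lemma abs_mul_le (a b : R) : `|a * b| <= (a ^+ 2 + b ^+ 2) / 2.
Proof.
rewrite normrM -(real_normK (num_real a)) -(real_normK (num_real b)).
have := sqr_ge0 (`|a| - `|b|); rewrite sqrrB mulr2n; lra.
Qed.

Lemma sumbl_mul G f g : sumbl G (fun i => f i ^+ 2) -> sumbl G (fun i => g i ^+ 2) ->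
  sumbl G (fun i => f i * g i).
Proof.
move=> hf hg; apply: (@sumbl_bound _ _ ((nrm G (fun i => f i ^+ 2) + nrm G (fun i => g i ^+ 2)) / 2)).
move=> s us sG.
apply: (le_trans (y := \sum_(i <- s) (f i ^+ 2 + g i ^+ 2) / 2)).
  by apply: ler_sum => i _; apply: abs_mul_le.
rewrite -mulr_suml big_split /= ler_wpM2r // ?invr_ge0 // lerD //.
  by apply: le_trans (sumbl_le hf us sG); apply: ler_sum => i _; rewrite ger0_norm ?sqr_ge0.
by apply: le_trans (sumbl_le hg us sG); apply: ler_sum => i _; rewrite ger0_norm ?sqr_ge0.
Qed.


Lemma le_lim (x y K : R) : 0 <= K ->
  (forall eta, 0 < eta -> eta <= 1 -> x <= y + eta * K) -> x <= y.
Proof.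
move=> K0 H; apply/ler_addgt0Pr => e e0.
have d0 : 0 < K + 1 + e by lra.
have h1 : 0 < e / (K + 1 + e) by rewrite divr_gt0.
have h2 : e / (K + 1 + e) <= 1 by rewrite ler_pdivrMr // mul1r; lra.
apply: (le_trans (H _ h1 h2)); rewrite lerD2l mulrAC ler_pdivrMr //.
rewrite mulrDr; nra.
Qed.

Lemma sum_cst (F : seq I) (c : R) : \sum_(i <- F) c = c * (size F)%:R.
Proof.
elim: F => [|i F IH]; first by rewrite big_nil mulr0.
by rewrite big_cons IH /= -addn1 natrD mulrDr mulr1 addrC.
Qed.

Lemma term_le_sum (F : seq I) (f : I -> R) i : uniq F -> i \in F ->
  (forall j, j \in F -> 0 <= f j) -> f i <= \sum_(j <- F) f j.
Proof.
move=> uF iF f0; rewrite (bigD1_seq i) //= lerDl big_seq_cond.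
by apply: sumr_ge0 => j /andP[/f0].
Qed.

Lemma sq_perturb (a g B eta : R) : `|g - a| <= eta -> 0 < eta -> eta <= 1 ->
  a ^+ 2 <= B -> g ^+ 2 <= a ^+ 2 + eta * (2 * (1 + B) + 1).
Proof.
move=> hd e0 e1 hB.
have ha : `|a| <= 1 + B.
  have := real_normK (num_real a); have := normr_ge0 a; nra.
set d := g - a.
have -> : g = a + d by rewrite /d addrC subrK.
have h1 : a * d <= `|a| * `|d| by rewrite -normrM ler_norm.
have h2 : `|a| * `|d| <= (1 + B) * eta by apply: ler_pM.
have h3 : d ^+ 2 <= eta by rewrite -(real_normK (num_real d)); have := normr_ge0 d; nra.
rewrite sqrrD mulr2n; nra.
Qed.

Lemma opb_ext G (P : I -> I -> R) Lam (F : seq I) v V :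
  op_bounded G P Lam -> uniq F -> inG G F ->
  (forall i, i \in F -> sumbl G (fun j => P i j * v j)) ->
  approx G (fun j => v j ^+ 2) V ->
  \sum_(i <- F) (gsum G (fun j => P i j * v j)) ^+ 2 <= Lam ^+ 2 * V.
Proof.
move=> hP uF FG hs hV.
have V0 : 0 <= V.
  by have := approx_ge (fun i _ => sqr_ge0 (v i)) hV (s := [::]) isT (fun i (h : i \in [::]) => ltac:(by [])); rewrite big_nil.
set B := Lam ^+ 2 * V.
have B0 : 0 <= B by rewrite mulr_ge0 // sqr_ge0.
set g := fun i => gsum G (fun j => P i j * v j).
apply: (@le_lim _ _ ((size F)%:R * (2 * (1 + B) + 1))).
  by rewrite mulr_ge0 //; lra.
move=> eta e0 e1.
have : forall i, exists s0, i \in F -> inG G s0 /\ forall s, uniq s -> inG G s -> {subset s0 <= s} ->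
    `|\sum_(j <- s) P i j * v j - g i| <= eta.
  move=> i; case: (boolP (i \in F)) => iF; last by exists [::].
  by have [s0 s0G H] := gsum_approx (hs i iF) e0; exists s0.
move=> /choice[sf hsf].
set J := undup (F ++ flatten (map sf F)).
have uJ : uniq J by apply: undup_uniq.
have JG : inG G J.
  move=> j; rewrite mem_undup mem_cat => /orP[/FG //|/flatten_mapP[i iF]].
  by case: (hsf i iF) => + _; apply.
have FJ : {subset F <= J} by move=> i iF; rewrite mem_undup mem_cat iF.
set a := fun i => \sum_(j <- J) P i j * v j.
have hag : forall i, i \in F -> `|a i - g i| <= eta.
  move=> i iF; case: (hsf i iF) => _; apply => // j js.
  rewrite mem_undup mem_cat; apply/orP; right; apply/flatten_mapP; by exists i.
have hJ := hP J uJ JG v.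
have hVJ : \sum_(j <- J) v j ^+ 2 <= V by apply: approx_ge hV uJ JG => i _; exact: sqr_ge0.
have hFa : \sum_(i <- F) a i ^+ 2 <= B.
  have h1 : \sum_(i <- F) a i ^+ 2 <= \sum_(i <- J) a i ^+ 2.
    by apply: sum_le_sub => // i _; exact: sqr_ge0.
  have h2 : Lam ^+ 2 * \sum_(j <- J) v j ^+ 2 <= B by rewrite ler_wpM2l // sqr_ge0.
  exact: le_trans h1 (le_trans hJ h2).
apply: (le_trans (y := \sum_(i <- F) (a i ^+ 2 + eta * (2 * (1 + B) + 1)))).
  rewrite big_seq [X in _ <= X]big_seq; apply: ler_sum => i iF.
  apply: sq_perturb => //; first by rewrite distrC; exact: hag.
  apply: le_trans hFa; apply: (term_le_sum (f := fun i => a i ^+ 2)) => // j _; exact: sqr_ge0.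
rewrite big_split /= sum_cst; apply: lerD => //; lra.
Qed.


Lemma sum_delta_r s b (X : I -> R) : uniq s -> b \in s ->
  \sum_(i <- s) X i * (i == b)%:R = X b.
Proof. by move=> us bs; rewrite -(sum_delta X us bs); apply: eq_bigr => i _; rewrite mulrC. Qed.

Lemma quad_expand (F : seq I) (P : I -> I -> R) (c : I -> R) b t : uniq F -> b \in F ->
  \sum_(i <- F) \sum_(j <- F) (c i - t * (i == b)%:R) * P i j * (c j - t * (j == b)%:R)
  = \sum_(i <- F) \sum_(j <- F) c i * P i j * c j - t * \sum_(j <- F) P b j * c j
    - t * \sum_(i <- F) c i * P i b + t ^+ 2 * P b b.
Proof.
move=> uF bF.
have step : forall i, \sum_(j <- F) (c i - t * (i == b)%:R) * P i j * (c j - t * (j == b)%:R)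
   = (c i - t * (i == b)%:R) * \sum_(j <- F) P i j * c j - t * ((c i - t * (i == b)%:R) * P i b).
  move=> i.
  rewrite (eq_bigr (fun j => (c i - t * (i == b)%:R) * (P i j * c j)
      - t * (((c i - t * (i == b)%:R) * P i j) * (j == b)%:R))); last first.
    by move=> j _; ring.
  rewrite big_split /= -mulr_sumr sumrN -mulr_sumr.
  by rewrite (sum_delta_r (fun j => (c i - t * (i == b)%:R) * P i j) uF bF).
rewrite (eq_bigr _ (fun i _ => step i)).
set S := fun i => \sum_(j <- F) P i j * c j.
have e1 : \sum_(i <- F) (c i - t * (i == b)%:R) * S i = \sum_(i <- F) c i * S i - t * S b.
  rewrite (eq_bigr (fun i => c i * S i - t * ((i == b)%:R * S i))); last by move=> i _; ring.
  by rewrite big_split /= sumrN -mulr_sumr sum_delta.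
have e2 : \sum_(i <- F) t * ((c i - t * (i == b)%:R) * P i b) =
    t * \sum_(i <- F) c i * P i b - t ^+ 2 * P b b.
  rewrite (eq_bigr (fun i => t * (c i * P i b) - t ^+ 2 * ((i == b)%:R * P i b))); last by move=> i _; ring.
  by rewrite big_split /= sumrN -!mulr_sumr sum_delta.
rewrite big_split /= sumrN e1 e2.
have -> : \sum_(i <- F) \sum_(j <- F) c i * P i j * c j = \sum_(i <- F) c i * S i.
  by apply: eq_bigr => i _; rewrite /S mulr_sumr; apply: eq_bigr => j _; rewrite mulrA.
rewrite /S.
lra.
Qed.


Lemma neg_mul_le (x y e : R) : 0 < e -> - (x * y) <= (e * x ^+ 2 + y ^+ 2 / e) / 2.
Proof.
move=> e0; set w := y ^+ 2 / e.
have hw : w * e = y ^+ 2 by rewrite /w divfK // gt_eqF.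
have := sqr_ge0 (e * x + y); rewrite sqrrD mulr2n => hs.
nra.
Qed.

Lemma cs_limit G (P : I -> I -> R) Lp b (c : I -> R) :
  G b -> op_bounded G P Lp -> mx_symmetric G P -> mx_positive G P ->
  sumbl G (fun m => c m ^+ 2) ->
  (forall i, G i -> sumbl G (fun m => P i m ^+ 2)) ->
  (forall i, G i -> gsum G (fun m => P i m * c m) = (i == b)%:R) ->
  1 <= c b * P b b.
Proof.
move=> Gb hPb hPs hPp hc hrow hPc.
set K := gsum G (fun m => c m ^+ 2).
have hK : approx G (fun m => c m ^+ 2) K := gsum_approx hc.
have K0 : 0 <= K.
  have := approx_ge (fun i _ => sqr_ge0 (c i)) hK (s := [::]) isT
    (fun i (h : i \in [::]) => ltac:(by [])).
  by rewrite big_nil.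
set p := P b b.
have p0 : 0 <= p.
  have := hPp [:: b] isT (fun i => ltac:(by rewrite mem_seq1 => /eqP ->)) (fun _ => 1).
  by rewrite !big_seq1 mul1r mulr1.
set Kc := (K + Lp ^+ 2) / 2.
have Kc0 : 0 <= Kc by rewrite divr_ge0 // addr_ge0 // sqr_ge0.
suff main : forall eps, 0 < eps -> eps <= 1/2 -> (1 - eps) ^+ 2 <= (c b + eps * Kc) * p.
  apply: (@le_lim _ _ (2 + Kc * p)); first by rewrite addr_ge0 // mulr_ge0.
  move=> eta e0 e1.
  have h1 : 0 < eta / 2 by rewrite divr_gt0.
  have h2 : eta / 2 <= 1 / 2 by lra.
  have := main _ h1 h2.
  have := mulr_ge0 (ltW e0) (mulr_ge0 Kc0 p0).
  nra.
move=> eps e0 e1.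
have e2 : 0 < eps ^+ 2 by rewrite exprn_gt0.
have hrb : sumbl G (fun m => P b m * c m) := sumbl_mul (hrow b Gb) hc.
have hb := gsum_approx hrb; rewrite (hPc b Gb) eqxx in hb.
have [s1 s1G H1] := hb _ e0.
have [s2 s2G H2] := hK _ e2.
set F := undup (b :: s1 ++ s2).
have uF : uniq F := undup_uniq _.
have FG : inG G F.
  by move=> i; rewrite mem_undup in_cons mem_cat => /or3P[/eqP->|/s1G|/s2G].
have bF : b \in F by rewrite mem_undup mem_head.
have sub1 : {subset s1 <= F} by move=> i hi; rewrite mem_undup in_cons mem_cat hi orbT.
have sub2 : {subset s2 <= F} by move=> i hi; rewrite mem_undup in_cons mem_cat hi !orbT.
set a := \sum_(j <- F) P b j * c j.
have ha : `|a - 1| <= eps := H1 F uF FG sub1.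
have hs2 : `|\sum_(i <- F) c i ^+ 2 - K| <= eps ^+ 2 := H2 F uF FG sub2.
set w := fun m => if m \in F then 0 else c m.
set cF := fun m => if m \in F then c m ^+ 2 else 0.
have cF0 : forall i, G i -> i \notin F -> cF i = 0 by move=> i _ ni; rewrite /cF (negPf ni).
have hcF : approx G cF (\sum_(i <- F) c i ^+ 2).
  have := approx_fin uF FG cF0.
  by rewrite (eq_big_seq (fun i => c i ^+ 2)) // => i iF; rewrite /cF iF.
have hw2e : forall m, c m ^+ 2 + (-1) * cF m = w m ^+ 2.
  move=> m; rewrite /cF /w; case: (m \in F).
    by rewrite mulN1r subrr expr2 mul0r.
  by rewrite mulr0 addr0.
have hw : approx G (fun m => w m ^+ 2) (K - \sum_(i <- F) c i ^+ 2).
  have := approxD hK (approxZ (-1) hcF); rewrite mulN1r; exact: approx_ext.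
have hwK : K - \sum_(i <- F) c i ^+ 2 <= eps ^+ 2.
  by move: hs2; rewrite ler_norml => /andP[? ?]; lra.
have hcFs : sumbl G cF := sumbl_fin uF FG cF0.
have hw2s : sumbl G (fun m => w m ^+ 2) := sumbl_ext hw2e (sumblD hc (sumblZ (-1) hcFs)).
set T := fun i => gsum G (fun j => P i j * w j).
have hT : \sum_(i <- F) T i ^+ 2 <= Lp ^+ 2 * eps ^+ 2.
  apply: le_trans (opb_ext hPb uF FG (fun i iF => sumbl_mul (hrow i (FG i iF)) hw2s) hw) _.
  by rewrite ler_wpM2l // sqr_ge0.
have hdec : forall i, i \in F -> \sum_(j <- F) P i j * c j = (i == b)%:R - T i.
  move=> i iF; apply/eqP; rewrite eq_sym subr_eq; apply/eqP.
  rewrite -(hPc i (FG i iF)).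
  apply: gsum_eq; first exact: sumbl_mul (hrow i (FG i iF)) hc.
  set f1 := fun j => P i j * (if j \in F then c j else 0).
  have f10 : forall j, G j -> j \notin F -> f1 j = 0 by move=> j _ nj; rewrite /f1 (negPf nj) mulr0.
  have h1 : approx G f1 (\sum_(j <- F) P i j * c j).
    have := approx_fin uF FG f10.
    by rewrite (eq_big_seq (fun j => P i j * c j)) // => j jF; rewrite /f1 jF.
  apply: approx_ext (approxD h1 (gsum_approx (sumbl_mul (hrow i (FG i iF)) hw2s))).
  by move=> j; rewrite /f1 /w; case: (j \in F); rewrite ?mulr0 ?add0r ?addr0.
set q := \sum_(i <- F) \sum_(j <- F) c i * P i j * c j.
have hq : q = c b - \sum_(i <- F) c i * T i.
  rewrite /q (eq_big_seq (fun i => c i * (i == b)%:R - c i * T i)); last first.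
    move=> i iF /=; rewrite -mulrBr -hdec // mulr_sumr; apply: eq_bigr => j _.
    by rewrite mulrA.
  by rewrite sumrB sum_delta_r.
have hcs : \sum_(i <- F) c i ^+ 2 <= K := approx_ge (fun i _ => sqr_ge0 (c i)) hK uF FG.
have hcT : - \sum_(i <- F) c i * T i <= eps * Kc.
  rewrite -sumrN.
  apply: (le_trans (y := \sum_(i <- F) (eps * c i ^+ 2 + T i ^+ 2 / eps) / 2)).
    by apply: ler_sum => i _; apply: neg_mul_le.
  rewrite -mulr_suml big_split /= -mulr_sumr -mulr_suml.
  have hX : (\sum_(i <- F) T i ^+ 2) / eps <= Lp ^+ 2 * eps.
    by rewrite ler_pdivrMr // -mulrA -expr2.
  have hY : eps * \sum_(i <- F) c i ^+ 2 <= eps * K by rewrite ler_wpM2l // ltW.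
  rewrite /Kc; lra.
have hpsd : forall t, 0 <= q - 2 * t * a + t ^+ 2 * p.
  move=> t; have := hPp F uF FG (fun i => c i - t * (i == b)%:R).
  rewrite quad_expand //.
  have -> : \sum_(i <- F) c i * P i b = a.
    by rewrite /a; apply: eq_big_seq => i iF; rewrite (hPs _ _ (FG i iF) Gb) mulrC.
  rewrite -/a -/q -/p; lra.
have ha0 : 1 - eps <= a by move: ha; rewrite ler_norml => /andP[? ?]; lra.
have haq : a ^+ 2 <= q * p.
  case: (eqVneq p 0) => [pz|pnz].
    have anz : a != 0 by rewrite gt_eqF //; lra.
    have := hpsd ((q + 1) / (2 * a)).
    have -> : 2 * ((q + 1) / (2 * a)) * a = q + 1 by field.
    rewrite pz; lra.
  have pp : 0 < p by rewrite lt_def pnz p0.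
  have := hpsd (a / p).
  have -> : q - 2 * (a / p) * a + (a / p) ^+ 2 * p = (q * p - a ^+ 2) / p by field.
  move=> h; have := mulr_ge0 h p0; rewrite divfK //; lra.
have hqb : q <= c b + eps * Kc by rewrite hq; lra.
have : (1 - eps) ^+ 2 <= a ^+ 2 by nra.
have : q * p <= (c b + eps * Kc) * p by rewrite ler_wpM2r.
lra.
Qed.


Lemma gsum_ext G f g : (forall i, G i -> f i = g i) -> gsum G f = gsum G g.
Proof.
move=> e; rewrite /gsum; congr (fine _ - fine _); apply: eq_esum => i Gi; by rewrite e.
Qed.

Lemma sum_delta_sq (s : seq I) j : uniq s -> j \in s -> \sum_(j' <- s) ((j' == j)%:R : R) ^+ 2 = 1.
Proof.
move=> us js; rewrite (eq_bigr (fun j' => 1 * (j' == j)%:R)); first by rewrite (sum_delta_r (fun _ => 1)).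
by move=> j' _; case: (j' == j); rewrite ?expr2 ?mul1r ?mulr0 ?mulr1.
Qed.

Lemma col_bound G (K : I -> I -> R) L j s : op_bounded G K L -> G j -> uniq s -> inG G s ->
  \sum_(i <- s) K i j ^+ 2 <= L ^+ 2.
Proof.
move=> hK Gj us sG.
set F := undup (j :: s).
have uF : uniq F := undup_uniq _.
have FG : inG G F by move=> i; rewrite mem_undup in_cons => /orP[/eqP->|/sG].
have jF : j \in F by rewrite mem_undup mem_head.
have := hK F uF FG (fun j' => (j' == j)%:R).
rewrite sum_delta_sq // mulr1.
under eq_bigr do rewrite (sum_delta_r (fun j' => K _ j') uF jF).
apply: le_trans; apply: sum_le_sub => //; last by move=> i _; exact: sqr_ge0.
by move=> i hi; rewrite mem_undup in_cons hi orbT.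
Qed.

Lemma Pbb_lower G (P M : I -> I -> R) Lp Lam b (F0 : seq I) :
  G b -> uniq F0 -> inG G F0 -> b \in F0 ->
  (forall l, G l -> l \notin F0 -> M l b = 0) ->
  op_bounded G P Lp -> mx_symmetric G P -> mx_positive G P ->
  op_bounded G M Lam ->
  (forall i, G i -> mxmul G (mxmul G P P) M i b = (i == b)%:R) ->
  1 / (1 + `|Lam|) <= P b b.
Proof.
move=> Gb uF0 F0G bF0 hM0 hPb hPs hPp hMb hPPM.
have hcol : forall l, G l -> sumbl G (fun m => P m l ^+ 2).
  move=> l Gl; apply: (@sumbl_bound _ _ (Lp ^+ 2)) => s us sG.
  rewrite (eq_bigr (fun i => P i l ^+ 2)); last by move=> i _; rewrite ger0_norm // sqr_ge0.
  exact: (col_bound hPb Gl us sG).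
have hrow : forall i, G i -> sumbl G (fun m => P i m ^+ 2).
  move=> i Gi; apply: (@sumbl_bound _ _ (Lp ^+ 2)) => s us sG.
  rewrite big_seq (eq_bigr (fun m => P m i ^+ 2)); last first.
    by move=> m ms; rewrite ger0_norm ?sqr_ge0 // (hPs _ _ Gi (sG m ms)).
  rewrite -big_seq; exact: (col_bound hPb Gi us sG).
set N := fun i l => gsum G (fun m => P i m * P m l).
have hPPMfin : forall i, G i -> \sum_(l <- F0) N i l * M l b = (i == b)%:R.
  move=> i Gi; rewrite -(hPPM i Gi) /mxmul -/N.
  have h0 : forall l, G l -> l \notin F0 -> N i l * M l b = 0 by move=> l Gl nl; rewrite hM0 ?mulr0.
  by apply/esym; apply: gsum_eq; [exact: sumbl_fin uF0 F0G h0 | exact: approx_fin uF0 F0G h0].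
set c := fun m => \sum_(l <- F0) P m l * M l b.
have hc2e : forall m, c m ^+ 2 =
    \sum_(l <- F0) \sum_(l' <- F0) (M l b * M l' b) * (P m l * P m l').
  move=> m; rewrite expr2 /c mulr_suml; apply: eq_bigr => l _; rewrite mulr_sumr.
  by apply: eq_bigr => l' _; ring.
have hprod : forall l l', l \in F0 -> l' \in F0 -> sumbl G (fun m => P m l * P m l').
  by move=> l l' hl hl'; apply: sumbl_mul; apply: hcol; apply: F0G.
have hc2 : sumbl G (fun m => c m ^+ 2).
  apply: sumbl_ext (fun m => esym (hc2e m)) _.
  apply: sumbl_sum => l hl; apply: sumbl_sum => l' hl'; apply: sumblZ; exact: hprod.
have hPc : forall i, G i -> gsum G (fun m => P i m * c m) = (i == b)%:R.
  move=> i Gi; rewrite -(hPPMfin i Gi).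
  have e : forall m, \sum_(l <- F0) M l b * (P i m * P m l) = P i m * c m.
    by move=> m; rewrite /c mulr_sumr; apply: eq_bigr => l _; ring.
  have hs : forall l, l \in F0 -> sumbl G (fun m => P i m * P m l).
    by move=> l hl; apply: sumbl_mul; [exact: hrow | apply: hcol; exact: F0G].
  apply: gsum_eq.
    apply: sumbl_ext e _; apply: sumbl_sum => l hl; apply: sumblZ; exact: hs.
  rewrite (eq_bigr (fun l => M l b * N i l)); last by move=> l _; rewrite mulrC.
  apply: approx_ext e _; apply: approx_sum => l hl; apply: approxZ; exact: gsum_approx (hs l hl).
have hK : gsum G (fun m => c m ^+ 2) = M b b.
  apply: gsum_eq => //.
  have -> : M b b = \sum_(l <- F0) \sum_(l' <- F0) (M l b * M l' b) * N l l'.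
    rewrite -(sum_delta_r (fun l => M l b) uF0 bF0); apply: eq_big_seq => l hl.
    rewrite -(hPPMfin l (F0G l hl)) mulr_sumr; apply: eq_bigr => l' _; rewrite /N; ring.
  apply: approx_ext (fun m => esym (hc2e m)) _.
  apply: approx_sum => l hl; apply: approx_sum => l' hl'; apply: approxZ.
  have -> : N l l' = gsum G (fun m => P m l * P m l').
    by apply: gsum_ext => m Gm; rewrite (hPs _ _ (F0G l hl) Gm).
  exact: gsum_approx (hprod _ _ hl hl').
have hcs := cs_limit Gb hPb hPs hPp hc2 hrow hPc.
have hcb : c b ^+ 2 <= M b b.
  rewrite -hK; have := approx_ge (fun i _ => sqr_ge0 (c i)) (gsum_approx hc2) (s := [:: b]) isT
    (fun i => ltac:(by rewrite mem_seq1 => /eqP ->)).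
  by rewrite big_seq1.
have hMbb : M b b <= `|Lam|.
  have := hMb [:: b] isT (fun i => ltac:(by rewrite mem_seq1 => /eqP ->)) (fun _ => 1).
  rewrite !big_seq1 mulr1 expr1n mulr1 -(real_normK (num_real Lam)) => h.
  have := normr_ge0 Lam; nra.
have p0 : 0 <= P b b.
  have := hPp [:: b] isT (fun i => ltac:(by rewrite mem_seq1 => /eqP ->)) (fun _ => 1).
  by rewrite !big_seq1 mul1r mulr1.
have cb1 : c b <= 1 + `|Lam| by nra.
have L0 : 0 < 1 + `|Lam| by have := normr_ge0 Lam; lra.
rewrite ler_pdivrMr //; nra.
Qed.

End Sums.

Section Geo.
Context {R : realType} {dT : measure_display} {T : measurableType dT}.
Implicit Types (d : T -> T -> R) (mu : {measure set T -> \bar R}).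

Lemma dist0 d z : is_metric d -> d z z = 0.
Proof. by case=> _ [h _]; apply/h. Qed.

Lemma dball_center d z r : is_metric d -> 0 < r -> dball d z r z.
Proof. by move=> hm r0; rewrite /dball /= dist0. Qed.

Lemma dball_mono d z r r' : r <= r' -> dball d z r `<=` dball d z r'.
Proof. by move=> h w; rewrite /dball /= => /lt_le_trans; apply. Qed.

Lemma dtri d a b c : is_metric d -> d a c <= d a b + d b c.
Proof. by case=> _ [_ [_ h]]. Qed.

Lemma dsym d a b : is_metric d -> d a b = d b a.
Proof. by case=> _ [_ [h _]]. Qed.

Lemma dge0 d a b : is_metric d -> 0 <= d a b.
Proof. by case=> h _. Qed.

Lemma dball_open d z r : is_metric d -> dopen d (dball d z r).
Proof.
move=> hm w; rewrite /dball /= => hw; exists (r - d z w); first by rewrite subr_gt0.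
move=> u; rewrite /dball /= => hu; have := dtri z w u hm; lra.
Qed.

Lemma dball_meas d z r : is_metric d -> (forall U : set T, dopen d U -> measurable U) ->
  measurable (dball d z r).
Proof. by move=> hm hb; apply: hb; apply: dball_open. Qed.

Lemma VolE d mu z r : (mu (dball d z r) < +oo)%E ->
  mu (dball d z r) = (Vol mu d z r)%:E.
Proof. by move=> h; rewrite /Vol fineK // ge0_fin_numE. Qed.

Lemma Vol_pos d mu z r : (mu (dball d z r) < +oo)%E -> (0 < mu (dball d z r))%E ->
  0 < Vol mu d z r.
Proof. by move=> h1 h2; move: h2; rewrite (VolE h1) lte_fin. Qed.

Lemma Vol_sub d mu z w r r' : is_metric d -> (forall U : set T, dopen d U -> measurable U) ->
  (mu (dball d w r') < +oo)%E ->
  dball d z r `<=` dball d w r' -> Vol mu d z r <= Vol mu d w r'.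
Proof.
move=> hm hb hf hs.
have h : (mu (dball d z r) <= mu (dball d w r'))%E.
  exact: (le_measure mu (mem_set (dball_meas z r hm hb)) (mem_set (dball_meas w r' hm hb)) hs).
have hf' : (mu (dball d z r) < +oo)%E by apply: le_lt_trans hf.
by move: h; rewrite (VolE hf) (VolE hf') lee_fin.
Qed.

Lemma Vol_double d mu CX z r : (forall z r, (mu (dball d z r) < +oo)%E) ->
  (forall (z : T) (r : R), 0 < r -> (mu (dball d z (2 * r)) <= CX%:E * mu (dball d z r))%E) ->
  0 < r -> Vol mu d z (2 * r) <= CX * Vol mu d z r.
Proof.
move=> hf hd r0; have := hd z r r0; rewrite (VolE (hf _ _)) (VolE (hf _ _)) -EFinM lee_fin.
done.
Qed.

Lemma Vol_iter d mu CX z r n : (forall z r, (mu (dball d z r) < +oo)%E) ->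
  (forall (z : T) (r : R), 0 < r -> (mu (dball d z (2 * r)) <= CX%:E * mu (dball d z r))%E) ->
  0 <= CX -> 0 < r -> Vol mu d z (2 ^+ n * r) <= CX ^+ n * Vol mu d z r.
Proof.
move=> hf hd CX0 r0; elim: n => [|n IH]; first by rewrite !expr0 !mul1r.
have r1 : 0 < 2 ^+ n * r by rewrite mulr_gt0 // exprn_gt0.
rewrite exprS -mulrA; apply: le_trans (Vol_double z hf hd r1) _.
by rewrite exprS -mulrA ler_wpM2l.
Qed.


Lemma packing {I : choiceType} d mu (A1 : set I) (x : I -> T) (CX r : R) (xb : T) :
  is_metric d -> (forall U : set T, dopen d U -> measurable U) ->
  (forall z r, (mu (dball d z r) < +oo)%E) ->
  (forall z r, 0 < r -> (0 < mu (dball d z r))%E) ->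
  (forall (z : T) (r : R), 0 < r -> (mu (dball d z (2 * r)) <= CX%:E * mu (dball d z r))%E) ->
  0 <= CX -> 0 < r ->
  (forall l l', A1 l -> A1 l' -> l <> l' -> r / 8 <= d (x l) (x l')) ->
  finite_set [set l | A1 l /\ d xb (x l) < 16 * r].
Proof.
move=> hm hb hf hp hd CX0 r0 hsep.
set S := [set l | A1 l /\ d xb (x l) < 16 * r].
apply: contrapT => infS.
have [B BS Bn] := infinite_set_fset (Num.trunc (CX ^+ 10)).+1 infS.
set L : seq I := enum_fset B.
have uL : uniq L := fset_uniq B.
have LS : forall l, l \in L -> S l by move=> l hl; apply: BS.
set D := fun l => dball d (x l) (r / 16).
have r16 : 0 < r / 16 by rewrite divr_gt0.
set V17 := Vol mu d xb (17 * r).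
have V17p : 0 < V17 by apply: Vol_pos => //; apply: hp; rewrite mulr_gt0.
have hsum : \sum_(l <- L) Vol mu d (x l) (r / 16) <= V17.
  have tr : trivIset [set` L] D.
    move=> l l' hl hl' [w [h1 h2]]; apply: contrapT => ne.
    have := hsep l l' (LS l hl).1 (LS l' hl').1 ne.
    move: h1 h2; rewrite /D /dball /= => h1 h2.
    have := dtri (x l) w (x l') hm; rewrite (dsym w (x l') hm); lra.
  have mD : forall l, [set` L] l -> measurable (D l) by move=> l _; exact: dball_meas.
  have hU : mu (\bigcup_(l in [set` L]) D l) = (\sum_(l \in [set` L]) mu (D l))%E.
    exact: (measure_fin_bigcup mu (finite_seq L) tr mD).
  have hsub : \bigcup_(l in [set` L]) D l `<=` dball d xb (17 * r).
    move=> w [l hl]; rewrite /D /dball /= => hw.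
    have := dtri xb (x l) w hm; have := (LS l hl).2; lra.
  have hle : (mu (\bigcup_(l in [set` L]) D l) <= mu (dball d xb (17 * r)))%E.
    exact: (le_measure mu (mem_set (fin_bigcup_measurable (finite_seq L) mD))
              (mem_set (dball_meas xb (17 * r) hm hb)) hsub).
  move: hle; rewrite hU -fsbig_seq // (VolE (hf _ _)).
  under eq_bigr do rewrite (VolE (hf _ _)).
  by rewrite sumEFin lee_fin.
have hbig : forall l, l \in L -> V17 <= CX ^+ 10 * Vol mu d (x l) (r / 16).
  move=> l hl; apply: le_trans (Vol_iter (x l) 10 hf hd CX0 r16).
  apply: Vol_sub => // w; rewrite /dball /= => hw.
  have := dtri (x l) xb w hm; rewrite (dsym (x l) xb hm); have := (LS l hl).2.
  have -> : (2 : R) ^+ 10 * (r / 16) = 64 * r.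
    by rewrite !exprS expr0; lra.
  lra.
have : V17 * (size L)%:R <= CX ^+ 10 * V17.
  rewrite -sum_cst; apply: (le_trans (y := \sum_(l <- L) CX ^+ 10 * Vol mu d (x l) (r / 16))).
    rewrite big_seq [X in _ <= X]big_seq; apply: ler_sum => l hl; exact: hbig.
  by rewrite -mulr_sumr ler_wpM2l // exprn_ge0.
have hn : (Num.trunc (CX ^+ 10)).+1%:R <= (size L)%:R :> R by rewrite ler_nat.
have := truncnS_gt (CX ^+ 10).
rewrite [V17 * _]mulrC => h1 h2.
have : (size L)%:R <= CX ^+ 10 :> R by rewrite -(ler_pM2r V17p).
lra.
Qed.

End Geo.

Unset Implicit Arguments.

Theorem theorem2p8
  (R : realType) (dT : measure_display) (T : measurableType dT)
  (d : T -> T -> R) (mu : {measure set T -> \bar R})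
  (* metric measure space of homogeneous type *)
  (Hmetric : is_metric d)
  (Hborel : forall U : set T, dopen d U -> measurable U)
  (Hball_pos : forall (z : T) (r : R), 0 < r -> (0 < mu (dball d z r))%E)
  (Hball_fin : forall (z : T) (r : R), (mu (dball d z r) < +oo)%E)
  (Hdoubling : exists CX : R, forall (z : T) (r : R), 0 < r ->
      (mu (dball d z (2 * r)) <= CX%:E * mu (dball d z r))%E)
  (Hdiam : forall r : R, exists z w : T, r < d z w)
  (Hatom : forall z : T, mu [set z] = 0%E)
  (* dyadic reference points *)
  (delta : R) (Hdelta : 0 < delta <= 1 / 1000)
  (I : choiceType) (A : int -> set I) (x : I -> T)
  (Hxinj : forall (a b : I) (k l : int), A k a -> A l b -> x a = x b -> a = b)
  (HAnest : forall k : int, A k `<=` A (k + 1))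
  (HX0 : max_separated d 1 (x @` A 0) setT)
  (HXpos : forall n : nat, (x @` A n `<=` x @` A n.+1) /\
      max_separated d (delta ^ (Posz n.+1)) (x @` A n.+1) setT)
  (HXneg : forall n : nat,
      max_separated d (delta ^ (- Posz n.+1)) (x @` A (- Posz n.+1)) (x @` A (- Posz n)))
  (* Hytonen--Kairema dyadic cubes *)
  (Q : int -> I -> set T)
  (HQmeas : forall k a, A k a -> measurable (Q k a))
  (HQcover : forall (k : int) (z : T), exists2 a, A k a & Q k a z)
  (HQdisj : forall (k : int) (a b : I), A k a -> A k b -> a <> b -> Q k a `&` Q k b = set0)
  (HQnest : forall (k l : int) (a b : I), k <= l -> A k a -> A l b ->
      Q l b `<=` Q k a \/ Q l b `&` Q k a = set0)
  (HQball : forall (k : int) (a : I), A k a ->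
      dball d (x a) (delta ^ k / 3) `<=` Q k a /\ Q k a `<=` dball d (x a) (4 * delta ^ k))
  (HLdist : forall (k : int) (a b : I), A k a -> Lset A Q k a b ->
      d (x b) (x a) < 2 * delta ^ k)
  (* Auscher--Hytonen splines *)
  (s : int -> I -> T -> R)
  (Hsmeas : forall k a, A k a -> measurable_fun setT (s k a))
  (Hsind : forall (k : int) (a : I) (z : T), A k a ->
      \1_(dball d (x a) (delta ^ k / 8)) z <= s k a z <=
      \1_(dball d (x a) (8 * delta ^ k)) z)
  (Hsdiag : forall (k : int) (a : I), A k a -> s k a (x a) = 1)
  (Hsoff : forall (k : int) (a b : I), A k a -> A k b -> a <> b -> s k a (x b) = 0)
  (Hspart : forall (k : int) (z : T), (\esum_(a in A k) (s k a z)%:E = 1)%E)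
  (Hsholder : exists (Cs eta : R), 0 < eta <= 1 /\
      forall (k : int) (a : I) (z w : T), A k a ->
        `|s k a z - s k a w| <= Cs * powR (d z w / delta ^ k) eta)
  (* the matrices tilde M: uniformly bounded, positive (self-adjoint by definition) *)
  (HMbound : exists Lam : R, forall k : int,
      op_bounded (Gset A k) (Mtilde mu d delta x s k) Lam)
  (HMpos : forall k : int, mx_positive (Gset A k) (Mtilde mu d delta x s k))
  (* P k = tilde M^{-1/2} at level k *)
  (P : int -> I -> I -> R)
  (HP : forall k : int, is_inv_sqrt (Gset A k) (Mtilde mu d delta x s k) (P k)) :
  exists (eps0 C : R), 0 < eps0 < 1 /\ 0 < C /\
    forall (k : int) (a b : I), in_scrI A Q k a b ->
      dball d (x b) (eps0 * delta ^ k) `<=` Q k a /\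
      forall z : T, dball d (x b) (eps0 * delta ^ k) z ->
        C * (1 / Num.sqrt (fine (mu (Q k a)))) <= `|psi mu d delta A x s P k b z|.
Proof.
have [CX hCX] := Hdoubling.
have [Lam hLam] := HMbound.
have [z0 [w0 _]] := Hdiam 0.
have CX0 : 0 < CX.
  have h1 := Vol_pos (Hball_fin z0 1) (Hball_pos z0 1 ltr01).
  have h2 : 0 < Vol mu d z0 (2 * 1).
    by apply: Vol_pos; [exact: Hball_fin | apply: Hball_pos; rewrite mulr_gt0].
  have := Vol_double z0 Hball_fin hCX ltr01.
  nra.
set c0 := 1 / (1 + `|Lam|).
have c00 : 0 < c0 by rewrite /c0 divr_gt0 //; have := normr_ge0 Lam; lra.
have dpos : 0 < delta by case/andP: Hdelta.
have dle : delta <= 1 / 1000 by case/andP: Hdelta.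
exists (delta / 8), (c0 / CX).
split; first by apply/andP; split; lra.
split; first by rewrite divr_gt0.
move=> k a b [Aka [_ [[Ab Qsub] ba]]].
set r := delta ^ (k + 1).
have r0 : 0 < r by apply: exprz_gt0.
have hr : delta / 8 * delta ^ k = r / 8.
  by rewrite /r exprzDr ?unitfE ?gt_eqF // expr1z; ring.
rewrite hr.
have bcore : dball d (x b) (r / 8) `<=` Q k a.
  move=> z hz; apply: Qsub; apply: (HQball (k + 1) b Ab).1.
  by apply: dball_mono hz; rewrite -/r; lra.
split; first exact: bcore.
move=> z hz.
have s0 : forall kk g w, A kk g -> 0 <= s kk g w.
  move=> kk g w Ag; have /andP[h _] := Hsind kk g w Ag.
  by apply: le_trans h; rewrite indicE ler0n.
have s_supp : forall kk g w, A kk g -> s kk g w != 0 -> d (x g) w < 8 * delta ^ kk.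
  move=> kk g w Ag nz; case: (lerP (8 * delta ^ kk) (d (x g) w)) => // hge.
  have /andP[_ h] := Hsind kk g w Ag.
  rewrite indicE memNset in h; last by rewrite /dball /= => h0; move: hge; rewrite leNgt h0.
  have := s0 kk g w Ag; move: nz h; set v := s kk g w => nz h1 h2.
  by move: nz; rewrite (le_anti (introT andP (conj h1 h2))) eqxx.
have nAkb : ~ A k b.
  move=> Akb.
  have h1 : Q k a (x b) by apply: bcore; apply: dball_center => //; rewrite divr_gt0.
  have h2 : Q k b (x b).
    by apply: (HQball k b Akb).1; apply: dball_center => //; rewrite divr_gt0 // exprz_gt0.
  have := HQdisj k a b Aka Akb (fun e => ba (esym e)).
  by move/seteqP => [h _]; exact: (h (x b) (conj h1 h2)).
set G := Gset A k.
have Gb : G b by split.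
have GA : forall g, G g -> A (k + 1) g by move=> g [].
have sb1 : s (k + 1) b z = 1.
  have /andP[h1 h2] := Hsind (k + 1) b z Ab.
  rewrite indicE mem_set in h1; last exact: hz.
  apply/le_anti/andP; split; last exact: h1.
  by apply: le_trans h2 _; rewrite indicE; case: (_ \in _).
have sg0 : forall g, A (k + 1) g -> g <> b -> s (k + 1) g z = 0.
  move=> g Ag gb.
  have u : uniq [:: b; g] by rewrite /= inE andbT; apply/eqP => e; apply: gb; rewrite e.
  have sG : inG (A (k + 1)) [:: b; g] by move=> i; rewrite !inE => /orP[/eqP->|/eqP->].
  have := esum_ge_seq (fun g => s (k + 1) g z) u sG.
  rewrite (Hspart (k + 1) z) big_cons big_seq1 sb1 lee_fin => h.
  apply/le_anti/andP; split; [lra | exact: s0].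
pose f := fun g => P k b g * s (k + 1) g z / Num.sqrt (Vol mu d (x g) (delta ^ (k + 1))).
have hpsi : psi mu d delta A x s P k b z = P k b b / Num.sqrt (Vol mu d (x b) r).
  change (gsum G f = P k b b / Num.sqrt (Vol mu d (x b) r)).
  have u1 : uniq [:: b] by [].
  have i1 : inG G [:: b] by move=> i; rewrite mem_seq1 => /eqP ->.
  have f0 : forall g, G g -> g \notin [:: b] -> f g = 0.
    move=> g Gg; rewrite mem_seq1 => gb; rewrite /f sg0 ?mulr0 ?mul0r //; first exact: GA.
    by move=> e; rewrite e eqxx in gb.
  by rewrite (gsum_eq (sumbl_fin u1 i1 f0) (approx_fin u1 i1 f0)) big_seq1 /f sb1 mulr1.
have [[Lp hLp] [hPs [hPp hPPM]]] := HP k.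
set M := Mtilde mu d delta x s k.
set S := [set l | G l /\ d (x b) (x l) < 16 * r].
have sep : forall l l', G l -> G l' -> l <> l' -> r / 8 <= d (x l) (x l').
  move=> l l' Gl Gl' ne; case: (lerP (r / 8) (d (x l) (x l'))) => // hlt.
  have /andP[h _] := Hsind (k + 1) l (x l') (GA l Gl).
  rewrite indicE mem_set in h; last exact: hlt.
  by move: h; rewrite (Hsoff _ _ _ (GA l Gl) (GA l' Gl') ne) lern0.
have finS : finite_set S := packing (x b) Hmetric Hborel Hball_fin Hball_pos hCX (ltW CX0) r0 sep.
set F0 : seq I := fset_set S.
have uF0 : uniq F0 := fset_uniq _.
have memF0 : forall l, (l \in F0) = (l \in S) := in_fset_set finS.
have F0G : inG G F0 by move=> l; rewrite memF0 => /set_mem [].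
have bF0 : b \in F0.
  by rewrite memF0; apply/mem_set; split => //; rewrite dist0 //; lra.
have hM0 : forall l, G l -> l \notin F0 -> M l b = 0.
  move=> l Gl; rewrite memF0 => nl.
  have far : 16 * r <= d (x b) (x l).
    case: (lerP (16 * r) (d (x b) (x l))) => // h; exfalso.
    by move/negP: nl; apply; apply/mem_set; split.
  have z0' : forall w, s (k + 1) l w * s (k + 1) b w = 0.
    move=> w; case: (eqVneq (s (k + 1) l w) 0) => [->|nzl]; first by rewrite mul0r.
    case: (eqVneq (s (k + 1) b w) 0) => [->|nzb]; first by rewrite mulr0.
    have h1 := s_supp _ _ _ (GA l Gl) nzl; have h2 := s_supp _ _ _ Ab nzb.
    have := dtri (x b) w (x l) Hmetric; rewrite (dsym w (x l) Hmetric); rewrite -/r in h1 h2; lra.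
  rewrite /M /Mtilde.
  under eq_integral => w _ do rewrite z0'.
  by rewrite integral0 /= mul0r.
have hPbb : c0 <= P k b b.
  apply: (Pbb_lower Gb uF0 F0G bF0 hM0 hLp hPs hPp (hLam k)).
  by move=> i Gi; rewrite hPPM //; case: (i == b).
set mQ := fine (mu (Q k a)).
have mQm := HQmeas k a Aka.
have hQ1 : (mu (dball d (x b) (r / 3)) <= mu (Q k a))%E.
  exact: (le_measure mu (mem_set (dball_meas _ _ Hmetric Hborel)) (mem_set mQm)
     (fun w h => Qsub w ((HQball (k + 1) b Ab).1 w h))).
have hQ2 : (mu (Q k a) <= mu (dball d (x a) (4 * delta ^ k)))%E.
  exact: (le_measure mu (mem_set mQm) (mem_set (dball_meas _ _ Hmetric Hborel)) (HQball k a Aka).2).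
have mQE : mu (Q k a) = mQ%:E.
  rewrite /mQ fineK // ge0_fin_numE ?measure_ge0 //; exact: le_lt_trans hQ2 (Hball_fin _ _).
have hV3 : Vol mu d (x b) (r / 3) <= mQ by move: hQ1; rewrite (VolE (Hball_fin _ _)) mQE lee_fin.
have V3p : 0 < Vol mu d (x b) (r / 3).
  by apply: Vol_pos; [exact: Hball_fin | apply: Hball_pos; rewrite divr_gt0].
have hVb : Vol mu d (x b) r <= CX ^+ 2 * mQ.
  have r4 : 0 < r / 4 by rewrite divr_gt0.
  have := Vol_iter (x b) 2 Hball_fin hCX (ltW CX0) r4.
  have -> : (2 : R) ^+ 2 * (r / 4) = r by rewrite expr2; lra.
  move=> h; apply: le_trans h _; rewrite ler_pM2l ?exprn_gt0 //.
  apply: (le_trans _ hV3); apply: Vol_sub => //. all: try exact: Hball_fin. all: try (apply: dball_mono; lra).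
have Vbp : 0 < Vol mu d (x b) r by apply: Vol_pos; [exact: Hball_fin | exact: Hball_pos].
rewrite hpsi.
set Vb := Vol mu d (x b) r.
have mQp : 0 < mQ by lra.
set u := Num.sqrt Vb; set wq := Num.sqrt mQ.
have up : 0 < u by rewrite sqrtr_gt0.
have wqp : 0 < wq by rewrite sqrtr_gt0.
have huw : u <= CX * wq.
  rewrite /u /wq -(ger0_norm (ltW CX0)) -sqrtr_sqr -sqrtrM ?sqr_ge0 // ler_sqrt //.
  by rewrite mulr_ge0 ?sqr_ge0 // ltW.
have Pb0 : 0 < P k b b by lra.
rewrite ger0_norm; last by rewrite divr_ge0 // ltW.
have e : c0 / CX * (1 / wq) = c0 / (CX * wq) by rewrite mul1r -mulrA invfM.
rewrite e ler_pdivrMr ?mulr_gt0 //.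
have t0 : 0 <= P k b b / u by rewrite divr_ge0 // ltW.
have tu : P k b b / u * u = P k b b by rewrite divfK // gt_eqF.
have := ler_wpM2l t0 huw.
lra.
Qed.
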